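(* Let $A$ be a ring and $M$ a left $A$-module, and assume that the trace functor $\mathcal T^M$ is exact. Let $0\to K\to X\to N\to 0$ be an exact sequence of left $A$-modules such that $N\in\sigma[M]$ and $K$ is superfluous in $X$. Then $X\in\sigma[M]$. In other words, $\sigma[M]$ is closed under superfluous epimorphisms in ${}_A\mathcal M$.
   Context: For a left $A$-module $M$, $\sigma[M]$ denotes the full subcategory of the category ${}_A\mathcal M$ of left $A$-modules consisting of the modules subgenerated by $M$, i.e. submodules of epimorphic images of direct sums $M^{(I)}$; it is closed under submodules, quotients and direct sums. The trace functor $\mathcal T^M:{}_A\mathcal M\to\sigma[M]$ is given by $\mathcal T^M(N)=\sum\{f(X)\mid X\in\sigma[M],\ f\in{}_A\mathrm{Hom}(X,N)\}$, equivalently the sum of all submodules of $N$ lying in $\sigma[M]$, i.e. the largest submodule of $N$ belonging to $\sigma[M]$; it is right adjoint to the inclusion $\sigma[M]\to{}_A\mathcal M$ and left exact. A submodule $K\subseteq X$ is superfluous (small), written $K\ll X$, if for every submodule $L\subseteq X$, $K+L=X$ implies $L=X$. *)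

(* Defs.v *)
From HB Require Import structures.
From mathcomp Require Import all_boot all_order all_algebra.
Set Implicit Arguments. Unset Strict Implicit. Unset Printing Implicit Defensive.
Import GRing.Theory.
Local Open Scope ring_scope.

(* Left A-modules are modelled by [lmodType A] for a ring [A : pzRingType].
   Submodules of a module X are predicates [P : X -> Prop] closed under the
   module operations. *)

Definition is_lin (A : pzRingType) (X Y : lmodType A) (f : X -> Y) : Prop :=
  forall (a : A) (x y : X), f (a *: x + y) = a *: f x + f y.

Definition is_submod (A : pzRingType) (X : lmodType A) (P : X -> Prop) : Prop :=
  P 0 /\ (forall (a : A) (x y : X), P x -> P y -> P (a *: x + y)).

(* Y is an epimorphic image of a direct sum M^(I): there is a family of
   linear maps g_i : M -> Y (i.e. a linear map M^(I) -> Y, by the universal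
   property of the direct sum) which is surjective, i.e. every y is a finite
   sum of elements g_i(m_i). *)
Definition epi_image_of_sum (A : pzRingType) (M Y : lmodType A) : Prop :=
  exists (I : Type) (g : I -> M -> Y),
    (forall i, is_lin (g i)) /\
    (forall y : Y, exists s : seq (I * M), y = \sum_(p <- s) g p.1 p.2).

(* The submodule P of X belongs to sigma[M]: P is isomorphic to a submodule
   of an epimorphic image Y of some M^(I), i.e. there is an injective linear
   map from P into such a Y. *)
Definition sigma_sub (A : pzRingType) (M X : lmodType A) (P : X -> Prop) : Prop :=
  exists (Y : lmodType A), epi_image_of_sum M Y /\
    exists h : X -> Y,
      (forall (a : A) (x y : X), P x -> P y -> h (a *: x + y) = a *: h x + h y) /\
      (forall x y : X, P x -> P y -> h x = h y -> x = y).

Definition in_sigma (A : pzRingType) (M N : lmodType A) : Prop :=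
  sigma_sub M (fun _ : N => True).

Definition trace (A : pzRingType) (M N : lmodType A) (x : N) : Prop :=
  exists s : seq N, x = \sum_(y <- s) y /\
    (forall y, y \in s -> exists P : N -> Prop,
        is_submod P /\ sigma_sub M P /\ P y).

(* T^M is exact: it sends every short exact sequence 0 -> N1 -f-> N2 -g-> N3 -> 0
   of left A-modules to a short exact sequence
   0 -> T^M(N1) -> T^M(N2) -> T^M(N3) -> 0 (with the restricted maps). *)
Definition trace_exact (A : pzRingType) (M : lmodType A) : Prop :=
  forall (N1 N2 N3 : lmodType A) (f : N1 -> N2) (g : N2 -> N3),
    is_lin f -> is_lin g -> injective f -> (forall z, exists y, g y = z) ->
    (forall y, g y = 0 <-> exists x, f x = y) ->
    [/\ (forall x, trace M x -> trace M (f x)),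
        (forall y, trace M y -> trace M (g y)),
        (forall x x', trace M x -> trace M x' -> f x = f x' -> x = x'),
        (forall y, trace M y -> (g y = 0 <-> exists x, trace M x /\ f x = y))
      & (forall z, trace M z -> exists y, trace M y /\ g y = z)].

Definition superfluous (A : pzRingType) (X : lmodType A) (K : X -> Prop) : Prop :=
  forall L : X -> Prop, is_submod L ->
    (forall x : X, exists k l, K k /\ L l /\ x = k + l) -> forall x : X, L x.

(* Main.v *)
Require Import Defs.
From HB Require Import structures.
From mathcomp Require Import all_boot all_order all_algebra.
From mathcomp Require Import boolp.
Set Implicit Arguments. Unset Strict Implicit. Unset Printing Implicit Defensive.
Import GRing.Theory.
Local Open Scope ring_scope.
Section DProd.
Variables (A : pzRingType) (I : Type) (F : I -> lmodType A).
Definition dprod := forall i, F i.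
HB.instance Definition _ := gen_eqMixin dprod.
HB.instance Definition _ := gen_choiceMixin dprod.
Definition dzero : dprod := fun i => 0.
Definition dadd (u v : dprod) : dprod := fun i => u i + v i.
Definition dopp (u : dprod) : dprod := fun i => - u i.
Definition dscale (a : A) (u : dprod) : dprod := fun i => a *: u i.
Lemma daddA : associative dadd.
Proof. by move=> u v w; apply: functional_extensionality_dep => i; rewrite /dadd addrA. Qed.
Lemma daddC : commutative dadd.
Proof. by move=> u v; apply: functional_extensionality_dep => i; rewrite /dadd addrC. Qed.
Lemma dadd0 : left_id dzero dadd.
Proof. by move=> u; apply: functional_extensionality_dep => i; rewrite /dadd /dzero add0r. Qed.
Lemma daddN : left_inverse dzero dopp dadd.
Proof. by move=> u; apply: functional_extensionality_dep => i; rewrite /dadd /dopp /dzero addNr. Qed.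
HB.instance Definition _ := GRing.isZmodule.Build dprod daddA daddC dadd0 daddN.
Lemma dscaleA a b v : dscale a (dscale b v) = dscale (a * b) v.
Proof. by apply: functional_extensionality_dep => i; rewrite /dscale scalerA. Qed.
Lemma dscale1 : left_id 1 dscale.
Proof. by move=> u; apply: functional_extensionality_dep => i; rewrite /dscale scale1r. Qed.
Lemma dscaleDr : right_distributive dscale +%R.
Proof. by move=> a u v; apply: functional_extensionality_dep => i; rewrite /dscale /= /dadd scalerDr. Qed.
Lemma dscaleDl v : {morph dscale^~ v: a b / a + b}.
Proof. by move=> a b; apply: functional_extensionality_dep => i; rewrite /dscale /= /dadd scalerDl. Qed.
HB.instance Definition _ := GRing.Zmodule_isLmodule.Build A dprod dscaleA dscale1 dscaleDr dscaleDl.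
Lemma dprod_addE (u v : dprod) i : (u + v) i = u i + v i. Proof. by []. Qed.
Lemma dprod_scaleE a (u : dprod) i : (a *: u) i = a *: u i. Proof. by []. Qed.
Lemma dprod_zeroE i : (0 : dprod) i = 0. Proof. by []. Qed.
Lemma dprod_oppE (u : dprod) i : (- u) i = - u i. Proof. by []. Qed.
End DProd.
Section SubmodFacts.
Variables (A : pzRingType) (U : lmodType A) (P : U -> Prop) (HP : is_submod P).
Lemma sm0 : P 0. Proof. by case: HP. Qed.
Lemma smD x y : P x -> P y -> P (x + y).
Proof. by move=> Hx Hy; have := (proj2 HP) 1 x y Hx Hy; rewrite scale1r. Qed.
Lemma smZ a x : P x -> P (a *: x).
Proof. by move=> Hx; have := (proj2 HP) a x 0 Hx sm0; rewrite addr0. Qed.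
Lemma smN x : P x -> P (- x).
Proof. by move=> Hx; have := smZ (-1) Hx; rewrite scaleN1r. Qed.
Lemma smB x y : P x -> P y -> P (x - y).
Proof. by move=> Hx Hy; apply: smD => //; apply: smN. Qed.
End SubmodFacts.

Section Quot.
Variables (A : pzRingType) (U : lmodType A) (S R : U -> Prop).
Hypotheses (HS : is_submod S) (HR : is_submod R) (HRS : forall u, R u -> S u).

Definition cls (u : U) : U -> Prop := fun v => R (v - u).
Definition Qt0 of is_submod S & is_submod R := {c : U -> Prop | exists u, S u /\ c = cls u}.
Local Notation Qt := (Qt0 HS HR).
HB.instance Definition _ := gen_eqMixin Qt.
HB.instance Definition _ := gen_choiceMixin Qt.

Definition sel (u : U) : U := if pselect (S u) then u else 0.
Lemma selS u : S (sel u).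
Proof. rewrite /sel; destruct (pselect (S u)) => //; exact: sm0. Qed.
Lemma selE u : S u -> sel u = u.
Proof. by rewrite /sel; destruct (pselect (S u)). Qed.

Definition mk (u : U) : Qt := exist _ (cls (sel u)) (ex_intro _ (sel u) (conj (selS u) erefl)).
Definition repr (c : Qt) : U := proj1_sig (cid (proj2_sig c)).
Lemma reprS c : S (repr c).
Proof. by move: (proj2_sig (cid (proj2_sig c))) => []. Qed.
Lemma repr_cls c : proj1_sig c = cls (repr c).
Proof. by move: (proj2_sig (cid (proj2_sig c))) => []. Qed.

Lemma Qt_eq (c d : Qt) : proj1_sig c = proj1_sig d -> c = d.
Proof.
case: c d => c Hc [d Hd] /= E; subst d; congr exist; exact: Prop_irrelevance.
Qed.

Lemma cls_eq u v : R (u - v) -> cls u = cls v.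
Proof.
move=> Ruv; apply: funext => w; apply: propext; rewrite /cls; split => H.
- have -> : w - v = (w - u) + (u - v) by rewrite addrA subrK.
  exact: smD.
- have -> : w - u = (w - v) - (u - v) by rewrite opprB addrA subrK.
  exact: smB.
Qed.

Lemma mk_congr u v : S u -> S v -> R (u - v) -> mk u = mk v.
Proof. by move=> Su Sv Ruv; apply: Qt_eq; rewrite /= !selE //; apply: cls_eq. Qed.

Lemma mk_inj u v : S u -> S v -> mk u = mk v -> R (u - v).
Proof.
move=> Su Sv /(congr1 (@proj1_sig _ _)) /=; rewrite !selE // => E.
have : cls u u by rewrite /cls subrr; apply: sm0.
by rewrite E.
Qed.

Lemma mk_repr c : mk (repr c) = c.
Proof. apply: Qt_eq; rewrite /= selE; [by rewrite (repr_cls c) | exact: reprS]. Qed.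

Lemma repr_mk u : S u -> R (repr (mk u) - u).
Proof.
move=> Su; apply: mk_inj => //; first exact: reprS.
by rewrite mk_repr.
Qed.

Definition qzero : Qt := mk 0.
Definition qadd (c d : Qt) : Qt := mk (repr c + repr d).
Definition qopp (c : Qt) : Qt := mk (- repr c).
Definition qscale (a : A) (c : Qt) : Qt := mk (a *: repr c).

Lemma mkD u v : S u -> S v -> qadd (mk u) (mk v) = mk (u + v).
Proof.
move=> Su Sv; apply: mk_congr; [apply: (smD HS); exact: reprS| exact: (smD HS)|].
by rewrite opprD addrACA; apply: (smD HR); apply: repr_mk.
Qed.
Lemma mkN u : S u -> qopp (mk u) = mk (- u).
Proof.
move=> Su; apply: mk_congr; [apply: (smN HS); exact: reprS| exact: (smN HS)|].
rewrite opprK addrC -opprB; apply: (smN HR); exact: repr_mk.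
Qed.
Lemma mkZ a u : S u -> qscale a (mk u) = mk (a *: u).
Proof.
move=> Su; apply: mk_congr; [apply: (smZ HS _); exact: reprS| exact: (smZ HS _)|].
by rewrite -scalerBr; apply: (smZ HR _); apply: repr_mk.
Qed.

Ltac qind := repeat match goal with | c : Qt |- _ => rewrite -(mk_repr c); move: (reprS c); move: (repr c) => ?; clear c; move=> ? end.

Lemma qaddA : associative qadd.
Proof. move=> c d e; qind; rewrite !mkD ?addrA //; by apply: smD. Qed.
Lemma qaddC : commutative qadd.
Proof. move=> c d; qind; by rewrite !mkD // addrC. Qed.
Lemma qadd0 : left_id qzero qadd.
Proof. move=> c; qind; rewrite /qzero mkD ?add0r //; exact: sm0. Qed.
Lemma qaddN : left_inverse qzero qopp qadd.
Proof. move=> c; qind; rewrite mkN // mkD ?addNr //; exact: smN. Qed.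
HB.instance Definition _ := GRing.isZmodule.Build Qt qaddA qaddC qadd0 qaddN.
Lemma qscaleA a b v : qscale a (qscale b v) = qscale (a * b) v.
Proof. qind; rewrite !mkZ ?scalerA //; exact: smZ. Qed.
Lemma qscale1 : left_id 1 qscale.
Proof. move=> c; qind; by rewrite mkZ // scale1r. Qed.
Lemma qscaleDr : right_distributive qscale qadd.
Proof. move=> a c d; qind; rewrite mkD // !mkZ ?mkD ?scalerDr //; by apply: smZ || apply: smD. Qed.
Lemma qscaleDl v : {morph qscale^~ v: a b / a + b >-> qadd a b}.
Proof. move=> a b; qind; rewrite !mkZ ?mkD ?scalerDl //; exact: smZ. Qed.
HB.instance Definition _ := GRing.Zmodule_isLmodule.Build A Qt qscaleA qscale1 qscaleDr qscaleDl.

Lemma mk_lin a u v : S u -> S v -> mk (a *: u + v) = a *: mk u + mk v.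
Proof. move=> Su Sv; rewrite -[_ + mk v]/(qadd (qscale a (mk u)) (mk v)) mkZ // mkD //; exact: smZ. Qed.
End Quot.

Lemma sum_eval (A : pzRingType) (I : Type) (F : I -> lmodType A) (T : Type) (l : seq T)
  (u : T -> dprod F) i : (\sum_(t <- l) u t) i = \sum_(t <- l) u t i.
Proof.
elim: l => [|t l IH]; first by rewrite !big_nil.
by rewrite !big_cons dprod_addE IH.
Qed.

Lemma lin_on_0 (A : pzRingType) (X Y : lmodType A) (P : X -> Prop) (h : X -> Y) :
  P 0 -> (forall a x y, P x -> P y -> h (a *: x + y) = a *: h x + h y) -> h 0 = 0.
Proof.
move=> P0 Hl; have := Hl 1 0 0 P0 P0; rewrite scale1r addr0 scale1r => E.
by apply: (addrI (h 0)); rewrite addr0 -E.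
Qed.

Lemma lin_on_Z (A : pzRingType) (X Y : lmodType A) (P : X -> Prop) (h : X -> Y) :
  P 0 -> (forall a x y, P x -> P y -> h (a *: x + y) = a *: h x + h y) ->
  forall a x, P x -> h (a *: x) = a *: h x.
Proof.
move=> P0 Hl a x Px; have := Hl a x 0 Px P0.
by rewrite addr0 (lin_on_0 P0 Hl) addr0.
Qed.

Section Main.
Variables (A : pzRingType) (M X : lmodType A).
Hypothesis Htr : forall x : X, trace M x.

Definition Sig (P : X -> Prop) := is_submod P /\ sigma_sub M P.

Lemma epi_self : epi_image_of_sum M M.
Proof.
exists unit, (fun _ => id); split; first by move=> _ a x y.
by move=> y; exists [:: (tt, y)]; rewrite big_cons big_nil addr0.
Qed.

Lemma data_ex (P : X -> Prop) : exists d : {Y : lmodType A & X -> Y},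
  epi_image_of_sum M (projT1 d) /\ (Sig P ->
   (forall a x y, P x -> P y -> projT2 d (a *: x + y) = a *: projT2 d x + projT2 d y) /\
   (forall x y, P x -> P y -> projT2 d x = projT2 d y -> x = y)).
Proof.
case: (pselect (Sig P)) => [[SP [Y [epi [h [hl hi]]]]]|nS].
  by exists (existT _ Y h).
exists (existT (fun Y : lmodType A => X -> Y) M (fun _ => 0)); split => //.
exact: epi_self.
Qed.

Definition D (P : X -> Prop) : lmodType A := projT1 (proj1_sig (cid (data_ex P))).
Definition H (P : X -> Prop) : X -> D P := projT2 (proj1_sig (cid (data_ex P))).
Lemma D_epi P : epi_image_of_sum M (D P).
Proof. exact: (proj1 (proj2_sig (cid (data_ex P)))). Qed.
Lemma H_lin P : Sig P -> forall a x y, P x -> P y -> H P (a *: x + y) = a *: H P x + H P y.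
Proof. by move=> SP; case: (proj2 (proj2_sig (cid (data_ex P))) SP). Qed.
Lemma H_inj P : Sig P -> forall x y, P x -> P y -> H P x = H P y -> x = y.
Proof. by move=> SP; case: (proj2 (proj2_sig (cid (data_ex P))) SP). Qed.

Definition F (o : option (X -> Prop)) : lmodType A :=
  match o with None => X | Some P => D P end.
Definition U0 : lmodType A := dprod F.

Definition delta (o : option (X -> Prop)) (y : F o) : U0 :=
  fun o' => match pselect (o = o') with
            | left e => eq_rect o F y o' e
            | right _ => 0 end.

Lemma delta_self o (y : F o) : delta y o = y.
Proof.
rewrite /delta; case: (pselect (o = o)) => [e|//].
by rewrite (Prop_irrelevance e erefl).
Qed.
Lemma delta_ne o o' (y : F o) : o <> o' -> delta y o' = 0 :> F o'.
Proof. by move=> ne; rewrite /delta; case: (pselect (o = o')). Qed.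
Lemma delta_lin o a (y z : F o) : delta (a *: y + z) = a *: delta y + delta z.
Proof.
apply: functional_extensionality_dep => o'.
rewrite dprod_addE dprod_scaleE /delta; case: (pselect (o = o')) => [e|_].
  by case: o' / e.
by rewrite scaler0 addr0.
Qed.
Lemma delta0 o : delta (0 : F o) = 0.
Proof. apply: functional_extensionality_dep => o'; rewrite /delta; case: (pselect (o = o')) => [e|//]; by case: o' / e. Qed.
Lemma deltaZ o a (y : F o) : delta (a *: y) = a *: delta y.
Proof. by rewrite -[a *: y]addr0 delta_lin delta0 addr0. Qed.
Lemma deltaD o (y z : F o) : delta (y + z) = delta y + delta z.
Proof. by rewrite -{1}[y]scale1r delta_lin scale1r. Qed.
Lemma deltaB o (y z : F o) : delta (y - z) = delta y - delta z.
Proof. by rewrite deltaD -scaleN1r deltaZ scaleN1r. Qed.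

Fixpoint validl (l : seq ((X -> Prop) * X)) : Prop :=
  match l with [::] => True | e :: l' => (Sig e.1 /\ e.1 e.2) /\ validl l' end.

Definition gen (e : (X -> Prop) * X) : U0 :=
  @delta None e.2 - @delta (Some e.1) (H e.1 e.2).

Definition Rr (u : U0) : Prop := exists l, validl l /\ u = \sum_(e <- l) gen e.

Definition Fin (u : U0) : Prop := exists l : seq {P : X -> Prop & D P},
  Rr (u - \sum_(t <- l) @delta (Some (projT1 t)) (projT2 t)).


Lemma Rr_sub : is_submod Rr.
Proof.
split; first by exists [::]; rewrite big_nil.
move=> a u v [lu [Vu ->]] [lv [Vv ->]].
exists ([seq (e.1, a *: e.2) | e <- lu] ++ lv); split.
  elim: lu Vu => [|e l IH] /= => [_|[[Se Pe] V]]; first exact: Vv.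
  split; last exact: IH.
  by split => //=; apply: (smZ (proj1 Se)).
rewrite big_cat big_map; congr (_ + _).
elim: lu Vu => [|e l IH] /= => [_|[[Se Pe] V]]; first by rewrite !big_nil scaler0.
rewrite !big_cons scalerDr IH //; congr (_ + _).
rewrite /gen /= (lin_on_Z (sm0 (proj1 Se)) (H_lin Se)) // !deltaZ.
by rewrite scalerBr.
Qed.

Lemma Fin_sub : is_submod Fin.
Proof.
split; first by exists [::]; rewrite big_nil subr0; apply: (sm0 Rr_sub).
move=> a u v [lu Ru] [lv Rv].
exists ([seq existT (fun P => D P) (projT1 t) (a *: projT2 t) | t <- lu] ++ lv).
rewrite big_cat big_map.
have -> : \sum_(j <- lu) delta (a *: projT2 j : F (Some (projT1 j))) =
          a *: \sum_(t <- lu) delta (projT2 t : F (Some (projT1 t))).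
  rewrite scaler_sumr; apply: eq_bigr => t _; exact: deltaZ.
rewrite opprD addrACA -scalerBr.
exact: (proj2 Rr_sub).
Qed.

Lemma Rr_Fin u : Rr u -> Fin u.
Proof. by move=> Ru; exists [::]; rewrite big_nil subr0. Qed.

Lemma FinS P (y : D P) : Fin (delta (y : F (Some P))).
Proof.
exists [:: existT _ P y]; rewrite big_cons big_nil addr0 subrr.
exact: (sm0 Rr_sub).
Qed.

Lemma FinX (x : X) : Fin (delta (x : F None)).
Proof.
have [s [-> Hs]] := Htr x.
elim: s Hs => [|y s IH] Hs.
  rewrite big_nil; rewrite (_ : delta _ = 0); first exact: (sm0 Fin_sub).
  exact: delta0.
rewrite big_cons (deltaD (y : F None)); apply: (smD Fin_sub).
  have [P [SP [sP Py]]] := Hs y (mem_head _ _).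
  exists [:: existT _ P (H P y)]; rewrite big_cons big_nil addr0.
  exists [:: (P, y)]; split; first by [].
  by rewrite big_cons big_nil addr0.
apply: IH => z zs; apply: Hs; by rewrite in_cons zs orbT.
Qed.


Lemma validl_filter (p : pred ((X -> Prop) * X)) l : validl l -> validl (filter p l).
Proof.
elim: l => [|e l IH] //= [He V]; case: (p e) => /=; [split=> //|]; exact: IH.
Qed.

Lemma H_sum_cond Q (SQ : Sig Q) l : validl l ->
  Q (\sum_(e <- l | `[< e.1 = Q >]) e.2) /\
  H Q (\sum_(e <- l | `[< e.1 = Q >]) e.2) = \sum_(e <- l | `[< e.1 = Q >]) H Q e.2.
Proof.
have sQ := proj1 SQ.
elim: l => [|e l IH] /=.
  rewrite !big_nil; split; [exact: sm0 | exact: (lin_on_0 (sm0 sQ) (H_lin SQ))].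
move=> [[Se Pe] V]; have [IH1 IH2] := IH V.
rewrite !big_cons; case: asboolP => [E|_]; last by split.
rewrite E in Pe Se.
split; first exact: (smD sQ).
by rewrite -{1}[e.2]scale1r (H_lin SQ) // scale1r IH2.
Qed.

Lemma group n l : (size l <= n)%N -> validl l ->
  (forall Q, \sum_(e <- l | `[< e.1 = Q >]) H Q e.2 = 0) -> \sum_(e <- l) e.2 = 0.
Proof.
elim: n l => [|n IHn] [|e l] //=; first by rewrite big_nil.
  by rewrite big_nil.
move=> sz [[Se Pe] V] HQ.
set Q := e.1.
rewrite (bigID (fun e' => `[< e'.1 = Q >])) /=.
have [S1 S2] := H_sum_cond Se (conj (conj Se Pe) V : validl (e :: l)).
have -> : \sum_(i <- e :: l | `[< i.1 = Q >]) i.2 = 0.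
  apply: (H_inj Se) => //; first exact: (sm0 (proj1 Se)).
  by rewrite S2 HQ (lin_on_0 (sm0 (proj1 Se)) (H_lin Se)).
rewrite add0r -big_filter.
have Ve : validl (e :: l) by [].
apply: IHn.
- rewrite /= (_ : `[< e.1 = Q >] = true) /=; last by apply/asboolP.
  rewrite size_filter; apply: leq_trans (count_size _ _) _; exact: sz.
- exact: validl_filter.
move=> Q'; rewrite big_filter_cond.
case: (pselect (Q' = Q)) => [->|ne].
  by rewrite big_pred0 // => i; case: asboolP => //= ->; rewrite asboolT.
rewrite -[RHS](HQ Q'); apply: eq_bigl => i.
case: (asboolP (i.1 = Q')) => [->|_]; last by rewrite andbF.
by rewrite andbT; apply/negP => /asboolP.
Qed.

Lemma Rr_None (z : X) : Rr (delta (z : F None)) -> z = 0.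
Proof.
move=> [l [V E]].
have Ez : z = \sum_(e <- l) e.2.
  have := congr1 (fun u : U0 => u None) E.
  rewrite /= delta_self sum_eval => ->; apply: eq_bigr => e _.
  by rewrite /gen dprod_addE dprod_oppE delta_self delta_ne // subr0.
rewrite Ez; apply: (@group (size l)) => // Q.
have := congr1 (fun u : U0 => u (Some Q)) E.
rewrite /= delta_ne // sum_eval => h.
rewrite big_mkcond /=; apply: (@eq_trans _ _ (- \sum_(t <- l) gen t (Some Q))); last by rewrite -h oppr0.
rewrite -sumrN; apply: eq_bigr => e _.
rewrite /gen dprod_addE dprod_oppE (delta_ne _ (_ : None <> Some Q)) // sub0r opprK.
case: asboolP => [E1|ne].
  by case: e E1 => P p /= E1; subst Q; rewrite delta_self.
by rewrite delta_ne // => [[]].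
Qed.


Definition W : lmodType A := Qt0 Fin_sub Rr_sub.
Definition mkW (u : U0) : W := mk Fin_sub Rr_sub u.

Lemma mkW_lin a u v : Fin u -> Fin v -> mkW (a *: u + v) = a *: mkW u + mkW v.
Proof. by move=> Su Sv; rewrite /mkW mk_lin. Qed.
Lemma mkWD u v : Fin u -> Fin v -> mkW (u + v) = mkW u + mkW v.
Proof. by move=> Su Sv; rewrite -{1}[u]scale1r mkW_lin // scale1r. Qed.
Lemma mkW0 : mkW 0 = 0.
Proof. by []. Qed.

Definition Idx := {phi : M -> W | is_lin phi}.
Definition Gen (w : W) : Prop :=
  exists s : seq (Idx * M), w = \sum_(p <- s) proj1_sig p.1 p.2.
Lemma Gen0 : Gen 0.
Proof. by exists [::]; rewrite big_nil. Qed.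
Lemma GenD w w' : Gen w -> Gen w' -> Gen (w + w').
Proof. by move=> [s ->] [s' ->]; exists (s ++ s'); rewrite big_cat. Qed.

Lemma GenS P (y : D P) : Gen (mkW (delta (y : F (Some P)))).
Proof.
have [J [g [gl gs]]] := D_epi P.
have [s ->] := gs y.
elim: s => [|p s IH].
  by rewrite big_nil (_ : delta _ = 0) ?mkW0; [exact: Gen0| exact: delta0].
rewrite big_cons (deltaD (_ : F (Some P))) mkWD; [ | exact: FinS | exact: FinS].
apply: GenD => //.
pose phi := fun m => mkW (delta (g p.1 m : F (Some P))).
have lphi : is_lin phi.
  by move=> a x z; rewrite /phi (gl p.1) (@delta_lin (Some P)) mkW_lin //; exact: FinS.
exists [:: (exist _ phi lphi, p.2)]; by rewrite big_cons big_nil addr0.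
Qed.

Lemma FinSum (l : seq {P : X -> Prop & D P}) :
  Fin (\sum_(t <- l) @delta (Some (projT1 t)) (projT2 t)) /\
  Gen (mkW (\sum_(t <- l) @delta (Some (projT1 t)) (projT2 t))).
Proof.
elim: l => [|t l [IH1 IH2]]; first by rewrite big_nil; split; [exact: (sm0 Fin_sub)| exact: Gen0].
rewrite big_cons; split; first by apply: (smD Fin_sub) => //; exact: FinS.
rewrite mkWD //; last exact: FinS.
apply: GenD => //; exact: GenS.
Qed.

Lemma final : in_sigma M X.
Proof.
exists W; split.
  exists Idx, (fun i => proj1_sig i); split; first by case.
  move=> w; rewrite -(mk_repr w).
  have [l Rl] := reprS w.
  have [F1 F2] := FinSum l.
  rewrite (mk_congr (v := \sum_(t <- l) @delta (Some (projT1 t)) (projT2 t)) _ _ (reprS w)) //.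
exists (fun x => mkW (delta (x : F None))); split.
  by move=> a x y _ _; rewrite (@delta_lin None) mkW_lin //; exact: FinX.
move=> x y _ _ E.
apply/eqP; rewrite -subr_eq0; apply/eqP; apply: Rr_None.
rewrite (deltaB (_ : F None)).
exact: (mk_inj (FinX x) (FinX y) E).
Qed.

End Main.

Lemma trace_sub (A : pzRingType) (M X : lmodType A) : is_submod (@trace A M X).
Proof.
split.
  by exists [::]; split; [rewrite big_nil | move=> y].
move=> a x y [sx [-> Hx]] [sy [-> Hy]].
exists ([seq a *: z | z <- sx] ++ sy); split.
  by rewrite big_cat big_map scaler_sumr.
move=> z; rewrite mem_cat => /orP [/mapP [z0 z0s ->]|zs]; last exact: Hy.
have [P [sP [gP Pz]]] := Hx z0 z0s.
by exists P; split => //; split => //; apply: (smZ sP).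
Qed.

Theorem proposition1p2 (A : pzRingType) (M : lmodType A) :
  trace_exact M ->
  forall (K X N : lmodType A) (f : K -> X) (g : X -> N),
    is_lin f -> is_lin g -> injective f -> (forall z, exists y, g y = z) ->
    (forall y, g y = 0 <-> exists k, f k = y) ->
    in_sigma M N ->
    superfluous (fun x : X => exists k, f k = x) ->
    in_sigma M X.
Proof.
move=> Hex K X N f g fl gl finj gsurj gker HN Hsup.
have [_ _ _ _ T5] := Hex K X N f g fl gl finj gsurj gker.
apply: final.
apply: (Hsup (@trace A M X) (trace_sub M X)) => x.
have trN : forall z : N, trace M z.
  move=> z; exists [:: z]; split; first by rewrite big_cons big_nil addr0.
  move=> y _; exists (fun _ => True); split; first by split.
  by split.
have [y [ty gy]] := T5 (g x) (trN _).
have gxy : g (x - y) = 0.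
  have := gl (-1) y x; rewrite scaleN1r addrC => ->.
  by rewrite gy scaleN1r addNr.
have [k fk] := (gker (x - y)).1 gxy.
exists (f k), y; split; first by exists k.
by split => //; rewrite fk subrK.
Qed.
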